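(* Let $\mathsf C$ be a triangulated category and let $A\to B\to C\to\Sigma A$ and $A'\to B'\to C'\to\Sigma A'$ be two homotopy equivalent exact triangles. Then $A\oplus B'\oplus C\cong A'\oplus B\oplus C'$.
   Context: An exact triangle $A\to B\to C\to\Sigma A$ induces a presentation of a functor $F\colon\mathsf C^{\mathrm{op}}\to\mathrm{Ab}$ if there is an exact sequence $\mathrm{Hom}(-,B)\to\mathrm{Hom}(-,C)\to F\to0$ in which the first map is induced by $B\to C$. Two exact triangles are homotopy equivalent if they induce presentations of the same functor. *)

(* Defs.v *)
From mathcomp Require Import all_boot all_algebra.
Set Implicit Arguments. Unset Strict Implicit. Unset Printing Implicit Defensive.
Import GRing.Theory.
Local Open Scope ring_scope.

Record PreAddCat := MkPreAddCat {
  Obj :> Type;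
  Hom : Obj -> Obj -> zmodType;
  idm : forall a, Hom a a;
  comp : forall a b c, Hom b c -> Hom a b -> Hom a c;
  compA : forall a b c d (h : Hom c d) (g : Hom b c) (f : Hom a b),
      comp h (comp g f) = comp (comp h g) f;
  comp1m : forall a b (f : Hom a b), comp (idm b) f = f;
  compm1 : forall a b (f : Hom a b), comp f (idm a) = f;
  compDl : forall a b c (g1 g2 : Hom b c) (f : Hom a b),
      comp (g1 + g2) f = comp g1 f + comp g2 f;
  compDr : forall a b c (g : Hom b c) (f1 f2 : Hom a b),
      comp g (f1 + f2) = comp g f1 + comp g f2 }.

Arguments Hom {_} _ _.
Arguments idm {_} _.
Arguments comp {_ _ _ _} _ _.
Notation "g \oc f" := (comp g f) (at level 40, left associativity).

Definition is_iso (C : PreAddCat) (a b : C) (f : Hom a b) : Prop :=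
  exists g : Hom b a, g \oc f = idm a /\ f \oc g = idm b.

Definition isomorphic (C : PreAddCat) (a b : C) : Prop :=
  exists f : Hom a b, is_iso f.

Record AddCat := MkAddCat {
  ac_pre :> PreAddCat;
  zobj : Obj ac_pre;
  zobj_init : forall a (f : Hom zobj a), f = 0;
  zobj_term : forall a (f : Hom a zobj), f = 0;
  bip : Obj ac_pre -> Obj ac_pre -> Obj ac_pre;
  bin1 : forall a b, Hom a (bip a b);
  bin2 : forall a b, Hom b (bip a b);
  bpr1 : forall a b, Hom (bip a b) a;
  bpr2 : forall a b, Hom (bip a b) b;
  bp11 : forall a b, bpr1 a b \oc bin1 a b = idm a;
  bp22 : forall a b, bpr2 a b \oc bin2 a b = idm b;
  bp12 : forall a b, bpr1 a b \oc bin2 a b = 0;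
  bp21 : forall a b, bpr2 a b \oc bin1 a b = 0;
  bpsum : forall a b, bin1 a b \oc bpr1 a b + bin2 a b \oc bpr2 a b = idm (bip a b) }.

Arguments zobj {_}.
Arguments bip {_} _ _.

Record triangle (C : AddCat) (Sig : C -> C) := Tri {
  ta : C; tb : C; tc : C;
  tu : Hom ta tb; tv : Hom tb tc; tw : Hom tc (Sig ta) }.
Arguments triangle : clear implicits.
Arguments Tri {C Sig ta tb tc}.

Section TriAxioms.
Variables (C : AddCat) (Sig : C -> C)
          (Sigm : forall a b : C, Hom a b -> Hom (Sig a) (Sig b))
          (dist : triangle C Sig -> Prop).

Definition tri_morph (T T' : triangle C Sig)
  (f : Hom (ta T) (ta T')) (g : Hom (tb T) (tb T')) (h : Hom (tc T) (tc T')) :=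
  [/\ g \oc tu T = tu T' \oc f,
      h \oc tv T = tv T' \oc g &
      Sigm f \oc tw T = tw T' \oc h].
Arguments tri_morph : clear implicits.

Definition Sig_is_additive_autoequivalence : Prop :=
  [/\ (forall a, Sigm (idm a) = idm (Sig a)),
      (forall a b c (g : Hom b c) (f : Hom a b), Sigm (g \oc f) = Sigm g \oc Sigm f),
      (forall a b (f g : Hom a b), Sigm (f + g) = Sigm f + Sigm g),
      (forall a b, bijective (@Sigm a b)) &
      (forall b, exists a, isomorphic (Sig a) b)].

Definition rot (T : triangle C Sig) : triangle C Sig :=
  Tri (tv T) (tw T) (- Sigm (tu T)).

Definition TR1 : Prop :=
  [/\ (forall a : C, dist (Tri (idm a) (0 : Hom a zobj) (0 : Hom zobj (Sig a)))),
      (forall T T', dist T ->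
         (exists f g h, tri_morph T T' f g h /\ [/\ is_iso f, is_iso g & is_iso h]) ->
         dist T') &
      (forall (a b : C) (u : Hom a b), exists c (v : Hom b c) (w : Hom c (Sig a)),
         dist (Tri u v w))].

Definition TR2 : Prop := forall T, dist T <-> dist (rot T).

Definition TR3 : Prop :=
  forall T T' (f : Hom (ta T) (ta T')) (g : Hom (tb T) (tb T')),
    dist T -> dist T' -> g \oc tu T = tu T' \oc f ->
    exists h, tri_morph T T' f g h.

Definition TR4 : Prop :=
  forall (x y z z' x' y' : C) (u : Hom x y) (v : Hom y z)
         (j : Hom y z') (k : Hom z' (Sig x))
         (l : Hom z x') (i : Hom x' (Sig y))
         (m : Hom z y') (n : Hom y' (Sig x)),
    dist (Tri u j k) -> dist (Tri v l i) -> dist (Tri (v \oc u) m n) ->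
    exists (f : Hom z' y') (g : Hom y' x'),
      [/\ dist (Tri f g (Sigm j \oc i)),
          f \oc j = m \oc v, n \oc f = k,
          g \oc m = l & Sigm u \oc n = i \oc g].
End TriAxioms.

Record TriCat := MkTriCat {
  tr_base :> AddCat;
  Sig : tr_base -> tr_base;
  Sigm : forall a b : tr_base, Hom a b -> Hom (Sig a) (Sig b);
  dist : triangle tr_base Sig -> Prop;
  Sig_ax : Sig_is_additive_autoequivalence Sigm;
  tr1 : TR1 Sigm dist;
  tr2 : TR2 Sigm dist;
  tr3 : TR3 Sigm dist;
  tr4 : TR4 Sigm dist }.
Arguments Sig : clear implicits.

Record ContraFunctor (C : PreAddCat) := MkContraFunctor {
  FO : C -> zmodType;
  FM : forall a b : C, Hom a b -> FO b -> FO a;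
  FM_add : forall a b (f : Hom a b) (x y : FO b), FM f (x + y) = FM f x + FM f y;
  FM_id : forall a (x : FO a), FM (idm a) x = x;
  FM_comp : forall a b c (g : Hom b c) (f : Hom a b) (x : FO c),
      FM (g \oc f) x = FM f (FM g x) }.

(* The exact triangle T induces a presentation of F: there is an exact sequence
   Hom(-,B) --(v o -)--> Hom(-,C) --eta--> F --> 0  of functors C^op -> Ab. *)
Definition induces_presentation (C : TriCat) (T : triangle C (Sig C))
    (F : ContraFunctor C) : Prop :=
  exists eta : forall X : C, Hom X (tc T) -> FO F X,
    [/\ (forall X (x y : Hom X (tc T)), eta X (x + y) = eta X x + eta X y),
        (forall X Y (f : Hom X Y) (x : Hom Y (tc T)),
            eta X (x \oc f) = FM f (eta Y x)),
        (forall X (z : FO F X), exists x, eta X x = z) &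
        (forall X (x : Hom X (tc T)),
            eta X x = 0 <-> exists y : Hom X (tb T), x = tv T \oc y)].

Definition homotopy_equivalent (C : TriCat) (T T' : triangle C (Sig C)) : Prop :=
  exists F : ContraFunctor C, induces_presentation T F /\ induces_presentation T' F.

(* Main.v *)
Require Import Defs.
From mathcomp Require Import all_boot all_algebra.
Set Implicit Arguments. Unset Strict Implicit. Unset Printing Implicit Defensive.
Import GRing.Theory.
Local Open Scope ring_scope.
Local Notation Hom := Defs.Hom.
Local Notation compA := Defs.compA.
Local Notation bin1 := Defs.bin1.
Local Notation bin2 := Defs.bin2.

Section Pre.
Variable C : PreAddCat.
Implicit Types a b c d : C.

Lemma comp0r a b c (g : Hom b c) : g \oc (0 : Hom a b) = 0.
Proof. apply: (addrI (g \oc 0)); by rewrite -compDr !addr0. Qed.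
Lemma comp0l a b c (f : Hom a b) : (0 : Hom b c) \oc f = 0.
Proof. apply: (addrI (0 \oc f)); by rewrite -compDl !addr0. Qed.
Lemma compNr a b c (g : Hom b c) (f : Hom a b) : g \oc (- f) = - (g \oc f).
Proof. apply: (addrI (g \oc f)); by rewrite -compDr !subrr comp0r. Qed.
Lemma compNl a b c (g : Hom b c) (f : Hom a b) : (- g) \oc f = - (g \oc f).
Proof. apply: (addrI (g \oc f)); by rewrite -compDl !subrr comp0l. Qed.
Lemma compBr a b c (g : Hom b c) (f1 f2 : Hom a b) : g \oc (f1 - f2) = g \oc f1 - g \oc f2.
Proof. by rewrite compDr compNr. Qed.
Lemma compBl a b c (g1 g2 : Hom b c) (f : Hom a b) : (g1 - g2) \oc f = g1 \oc f - g2 \oc f.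
Proof. by rewrite compDl compNl. Qed.

Lemma iso_of_inverses a b (f : Hom a b) (l r : Hom b a) :
  l \oc f = idm a -> f \oc r = idm b -> is_iso f.
Proof.
move=> hl hr; exists l; split => //.
have -> : l = r by rewrite -[l]compm1 -hr compA hl comp1m.
by [].
Qed.

Lemma iso_sym a b : isomorphic a b -> isomorphic b a.
Proof. by case=> f [g [h1 h2]]; exists g; exists f. Qed.

Lemma iso_trans a b c : isomorphic a b -> isomorphic b c -> isomorphic a c.
Proof.
case=> f [f' [h1 h2]] [g [g' [h3 h4]]]; exists (g \oc f); exists (f' \oc g'); split.
  by rewrite -compA (compA g') h3 comp1m.
by rewrite -compA (compA f) h2 comp1m.
Qed.
End Pre.

Section Add.
Variable C : AddCat.
Implicit Types a b c d p q r s z : C.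

Definition row p q z (f : Hom p z) (g : Hom q z) : Hom (bip p q) z :=
  f \oc bpr1 p q + g \oc bpr2 p q.
Definition col p q z (f : Hom z p) (g : Hom z q) : Hom z (bip p q) :=
  bin1 p q \oc f + bin2 p q \oc g.

Lemma row_bin1 p q z (f : Hom p z) (g : Hom q z) : row f g \oc bin1 p q = f.
Proof. by rewrite /row compDl -!compA bp11 bp21 comp0r addr0 compm1. Qed.
Lemma row_bin2 p q z (f : Hom p z) (g : Hom q z) : row f g \oc bin2 p q = g.
Proof. by rewrite /row compDl -!compA bp12 bp22 comp0r add0r compm1. Qed.
Lemma bpr1_col p q z (f : Hom z p) (g : Hom z q) : bpr1 p q \oc col f g = f.
Proof. by rewrite /col compDr !compA bp11 bp12 comp0l addr0 comp1m. Qed.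
Lemma bpr2_col p q z (f : Hom z p) (g : Hom z q) : bpr2 p q \oc col f g = g.
Proof. by rewrite /col compDr !compA bp21 bp22 comp0l add0r comp1m. Qed.
Lemma row_col p q z w (f : Hom p z) (g : Hom q z) (h : Hom w p) (k : Hom w q) :
  row f g \oc col h k = f \oc h + g \oc k.
Proof. by rewrite /col compDr !compA row_bin1 row_bin2. Qed.
Lemma comp_row p q z w (k : Hom z w) (f : Hom p z) (g : Hom q z) :
  k \oc row f g = row (k \oc f) (k \oc g).
Proof. by rewrite /row compDr !compA. Qed.
Lemma col_comp p q z w (k : Hom w z) (f : Hom z p) (g : Hom z q) :
  col f g \oc k = col (f \oc k) (g \oc k).
Proof. by rewrite /col compDl -!compA. Qed.
Lemma row_eta p q z (h : Hom (bip p q) z) : h = row (h \oc bin1 p q) (h \oc bin2 p q).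
Proof. by rewrite /row -!compA -compDr bpsum compm1. Qed.
Lemma col_eta p q z (h : Hom z (bip p q)) : h = col (bpr1 p q \oc h) (bpr2 p q \oc h).
Proof. by rewrite /col !compA -compDl bpsum comp1m. Qed.
Lemma row_eq p q z (f f' : Hom p z) (g g' : Hom q z) : f = f' -> g = g' -> row f g = row f' g'.
Proof. by move=> -> ->. Qed.
Lemma row0 p q z (f : Hom p z) (g : Hom q z) : row f g = 0 -> f = 0 /\ g = 0.
Proof.
move=> h; split; first by rewrite -(row_bin1 f g) h comp0l.
by rewrite -(row_bin2 f g) h comp0l.
Qed.
Lemma row_add p q z (f f' : Hom p z) (g g' : Hom q z) :
  row f g + row f' g' = row (f + f') (g + g').
Proof. by rewrite /row !compDl addrACA. Qed.
Lemma row_opp p q z (f : Hom p z) (g : Hom q z) : - row f g = row (- f) (- g).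
Proof. by rewrite /row !compNl opprD. Qed.
Lemma col_add p q z (f f' : Hom z p) (g g' : Hom z q) :
  col f g + col f' g' = col (f + f') (g + g').
Proof. by rewrite /col !compDr addrACA. Qed.
Lemma col_opp p q z (f : Hom z p) (g : Hom z q) : - col f g = col (- f) (- g).
Proof. by rewrite /col !compNr opprD. Qed.
Lemma idm_bip p q : idm (bip p q) = col (row (idm p) 0) (row 0 (idm q)).
Proof. by rewrite /col /row !comp0l addr0 add0r !comp1m bpsum. Qed.
End Add.

Section Contr.
Variable C : AddCat.
Implicit Types p q r s z : C.

Definition mx2 p q r s (a : Hom p r) (b : Hom q r) (c : Hom p s) (d : Hom q s)
  : Hom (bip p q) (bip r s) := col (row a b) (row c d).

Lemma mx2_comp p q r s t u (a : Hom p r) (b : Hom q r) (c : Hom p s) (d : Hom q s)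
  (a' : Hom t p) (b' : Hom u p) (c' : Hom t q) (d' : Hom u q) :
  mx2 a b c d \oc mx2 a' b' c' d' =
  mx2 (a \oc a' + b \oc c') (a \oc b' + b \oc d') (c \oc a' + d \oc c') (c \oc b' + d \oc d').
Proof. by rewrite /mx2 col_comp !row_col !comp_row !row_add. Qed.

Lemma mx2_id p q : mx2 (idm p) 0 0 (idm q) = idm (bip p q).
Proof. by rewrite /mx2 idm_bip. Qed.

Lemma contract (X3 X2 X1 X0 : C) (d3 : Hom X3 X2) (d2 : Hom X2 X1) (d1 : Hom X1 X0) :
 d2 \oc d3 = 0 -> d1 \oc d2 = 0 ->
 (exists H2 : Hom X2 X3, H2 \oc d3 = idm X3) ->
 (forall pi : Hom X2 X2, pi \oc d3 = 0 -> exists H1 : Hom X1 X2, H1 \oc d2 = pi) ->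
 (forall pi : Hom X1 X1, pi \oc d2 = 0 -> exists H0 : Hom X0 X1, H0 \oc d1 = pi) ->
 (exists s : Hom X0 X1, d1 \oc s = idm X0) ->
 isomorphic (bip X3 X1) (bip X2 X0).
Proof.
move=> d23 d12 [H2 eH2] hii hiii [sg es].
have [H1 eH1] := hii (idm X2 - d3 \oc H2) ltac:(by rewrite compBl comp1m -compA eH2 compm1 subrr).
have [H0 eH0] : exists H0 : Hom X0 X1, H0 \oc d1 = idm X1 - d2 \oc H1.
  apply: hiii; rewrite compBl comp1m -compA eH1 compBr compm1 compA d23 comp0l.
  by rewrite subr0 subrr.
have e0 : d1 \oc H0 = idm X0.
  have h : (d1 \oc H0 - idm X0) \oc d1 = 0.
    by rewrite compBl -compA eH0 compBr compm1 compA d12 comp0l subr0 comp1m subrr.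
  have := f_equal (fun t => t \oc sg) h; rewrite -compA es compm1 comp0l.
  by move/eqP; rewrite subr_eq0 => /eqP.
pose Phi := mx2 d3 H1 0 d1.
pose Psi := mx2 H2 0 d2 H0.
have ePP : Psi \oc Phi = mx2 (idm X3) (H2 \oc H1) 0 (idm X1).
  rewrite /Psi /Phi mx2_comp eH2 d23 !comp0l !comp0r !addr0 eH0.
  by rewrite addrC subrK.
have ePP' : Phi \oc Psi = mx2 (idm X2) (H1 \oc H0) 0 (idm X0).
  rewrite /Psi /Phi mx2_comp e0 d12 !comp0l !comp0r !addr0 !add0r.
  by rewrite eH1 addrC subrK.
exists Phi.
apply: (@iso_of_inverses _ _ _ _ (mx2 (idm X3) (- (H2 \oc H1)) 0 (idm X1) \oc Psi)
          (Psi \oc mx2 (idm X2) (- (H1 \oc H0)) 0 (idm X0))).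
  rewrite -compA ePP mx2_comp !comp1m !compm1 !comp0l !comp0r !addr0 !add0r.
  by rewrite subrr mx2_id.
rewrite compA ePP' mx2_comp !comp1m !compm1 !comp0l !comp0r !addr0 !add0r.
by rewrite addNr mx2_id.
Qed.
End Contr.

Lemma bip_assoc (C : AddCat) (a b c : C) :
  isomorphic (bip (bip a b) c) (bip a (bip b c)).
Proof.
exists (col (bpr1 a b \oc bpr1 _ c) (col (bpr2 a b \oc bpr1 _ c) (bpr2 _ c))).
exists (col (col (bpr1 a _) (bpr1 b c \oc bpr2 a _)) (bpr2 b c \oc bpr2 a _)); split.
  rewrite !col_comp -!compA !bpr1_col !bpr2_col !bpr1_col -col_eta.
  by rewrite [RHS]col_eta !compm1.
rewrite !col_comp -!compA !bpr1_col !bpr2_col -col_eta.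
by rewrite [RHS]col_eta !compm1.
Qed.

Lemma col00 (C : AddCat) (p q z : C) : col (0 : Hom z p) (0 : Hom z q) = 0.
Proof. by rewrite /col !comp0r addr0. Qed.
Lemma row00 (C : AddCat) (p q z : C) : row (0 : Hom p z) (0 : Hom q z) = 0.
Proof. by rewrite /row !comp0l addr0. Qed.

Section Tri.
Variable C : TriCat.
Implicit Types a b z : C.

Lemma Sig_add a b (f g : Hom a b) : Sigm (f + g) = Sigm f + Sigm g.
Proof. by case: (Sig_ax C). Qed.
Lemma Sig_comp a b c (g : Hom b c) (f : Hom a b) : Sigm (g \oc f) = Sigm g \oc Sigm f.
Proof. by case: (Sig_ax C). Qed.
Lemma Sig_id a : Sigm (idm a) = idm (Sig C a).
Proof. by case: (Sig_ax C). Qed.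
Lemma Sig0 a b : Sigm (0 : Hom a b) = 0.
Proof. apply: (addrI (Sigm (0 : Hom a b))); by rewrite -Sig_add !addr0. Qed.
Lemma SigN a b (f : Hom a b) : Sigm (- f) = - Sigm f.
Proof. apply: (addrI (Sigm f)); by rewrite -Sig_add !subrr Sig0. Qed.
Lemma Sig_inj a b (f g : Hom a b) : Sigm f = Sigm g -> f = g.
Proof.
case: (Sig_ax C) => _ _ _ hb _; case: (hb a b) => inv h1 h2 e.
by rewrite -(h1 f) e h1.
Qed.
Lemma Sig_surj a b (h : Hom (Sig C a) (Sig C b)) : exists f, Sigm f = h.
Proof. case: (Sig_ax C) => _ _ _ hb _; case: (hb a b) => inv h1 h2; by exists (inv h). Qed.

Lemma dist_rot (T : triangle C (Sig C)) : dist T -> dist (Defs.rot (@Sigm C) T).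
Proof. by move/(@tr2 C T). Qed.

Lemma dist_triv a : dist (Tri (idm a) (0 : Hom a zobj) (0 : Hom zobj (Sig C a))).
Proof. by case: (@tr1 C). Qed.

Lemma comp_vu (T : triangle C (Sig C)) : dist T -> tv T \oc tu T = 0.
Proof.
move=> dT.
have [h [e1 e2 e3]] := @tr3 C (Tri (idm (ta T)) (0 : Hom (ta T) zobj) (0 : Hom zobj (Sig C (ta T)))) T (idm (ta T)) (tu T) (dist_triv (ta T)) dT erefl.
by move: e2 => /= <-; rewrite comp0r.
Qed.

Lemma dist_X0 z : dist (Tri (0 : Hom zobj z) (idm z) (0 : Hom z (Sig C zobj))).
Proof.
apply/(@tr2 C); case: (@tr1 C) => _ h2 _.
apply: (h2 _ _ (dist_triv z)).
exists (idm z), (idm z), (0 : Hom zobj (Sig C zobj)); split.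
  by split; rewrite /= ?comp0l ?comp0r.
have isoid : is_iso (idm z) by exists (idm z); rewrite comp1m.
split => //; exists 0; split; rewrite comp0l.
  by rewrite (zobj_init (idm zobj)).
by rewrite -Sig_id (zobj_init (idm zobj)) Sig0.
Qed.

Lemma L1 (T : triangle C (Sig C)) : dist T ->
  forall z (h : Hom (tb T) z), h \oc tu T = 0 -> exists k : Hom (tc T) z, h = k \oc tv T.
Proof.
move=> dT z h hu.
have [k [e1 e2 e3]] := @tr3 C T (Tri (0 : Hom zobj z) (idm z) (0 : Hom z (Sig C zobj))) (0 : Hom (ta T) zobj) h dT (dist_X0 z)
   ltac:(by rewrite hu /= comp0r).
by exists k; rewrite e2 /= comp1m.
Qed.
End Tri.

Lemma add_fun_B (U V : zmodType) (e : U -> V) :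
  (forall x y, e (x + y) = e x + e y) -> forall x y, e (x - y) = e x - e y.
Proof.
move=> ea.
have e0 : e 0 = 0 by apply: (addrI (e 0)); rewrite -ea !addr0.
have eN : forall y, e (- y) = - e y.
  by move=> y; apply: (addrI (e y)); rewrite -ea !subrr.
by move=> x y; rewrite ea eN.
Qed.

Lemma sq_rot (C : TriCat) (T T' : triangle C (Sig C)) (g : Hom (tb T) (tb T'))
  (x : Hom (tc T) (tc T')) :
  dist T -> dist T' -> x \oc tv T = tv T' \oc g ->
  exists f : Hom (ta T) (ta T'), Sigm f \oc tw T = tw T' \oc x /\ g \oc tu T = tu T' \oc f.
Proof.
move=> dT dT' sq.
have [l [_ e2 e3]] := @tr3 C (Defs.rot (@Sigm C) T) (Defs.rot (@Sigm C) T') g x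
   (dist_rot dT) (dist_rot dT') sq.
have [f ef] := Sig_surj l.
exists f; split; first by rewrite ef e2.
move: e3 => /=; rewrite -ef compNl compNr -!Sig_comp => /oppr_inj.
exact: Sig_inj.
Qed.

Theorem lemmaA1 (C : TriCat) (T T' : triangle C (Sig C)) :
  dist T -> dist T' -> homotopy_equivalent T T' ->
  isomorphic (bip (bip (ta T) (tb T')) (tc T)) (bip (bip (ta T') (tb T)) (tc T')).
Proof.
move=> dT dT' [F [[eta [ea en es ek]] [eta' [ea' en' es' ek']]]].
have [x ex] := es' (tc T) (eta (tc T) (idm _)).
have kx : forall X (k : Hom X (tc T)), eta' X (x \oc k) = eta X k.
  by move=> X k; rewrite en' ex -en comp1m.
have [y ey] := es (tc T') (eta' (tc T') (idm _)).
have ky : forall X (k : Hom X (tc T')), eta X (y \oc k) = eta' X k.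
  by move=> X k; rewrite en ey -en' comp1m.
have [s es0] : exists s, y \oc x - idm _ = tv T \oc s.
  by apply/ek; rewrite (add_fun_B (ea _)) ky ex subrr.
have [s' es0'] : exists s', x \oc y - idm _ = tv T' \oc s'.
  by apply/ek'; rewrite (add_fun_B (ea' _)) kx ey subrr.
have [g eg] : exists g, x \oc tv T = tv T' \oc g.
  by apply/ek'; rewrite kx; apply/ek; exists (idm _); rewrite compm1.
have [g' eg'] : exists g', y \oc tv T' = tv T \oc g'.
  by apply/ek; rewrite ky; apply/ek'; exists (idm _); rewrite compm1.
have [f [ef1 ef2]] := sq_rot dT dT' eg.
have [f' [ef1' ef2']] := sq_rot dT' dT eg'.

have yx : y \oc x = idm _ + tv T \oc s by rewrite -es0 addrC subrK.
have xy : x \oc y = idm _ + tv T' \oc s' by rewrite -es0' addrC subrK.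
have vu0 := comp_vu dT.
have vu0' := comp_vu dT'.
have wv0 : tw T \oc tv T = 0 := comp_vu (dist_rot dT).
have wv0' : tw T' \oc tv T' = 0 := comp_vu (dist_rot dT').
have uw0 : Sigm (tu T) \oc tw T = 0.
  by apply: oppr_inj; rewrite oppr0 -compNl; exact: (comp_vu (dist_rot (dist_rot dT))).
have uw0' : Sigm (tu T') \oc tw T' = 0.
  by apply: oppr_inj; rewrite oppr0 -compNl; exact: (comp_vu (dist_rot (dist_rot dT'))).
apply: iso_trans (bip_assoc _ _ _) _.
apply: (@contract _ _ _ _ _ (col f (- tu T)) (mx2 (tu T') g 0 (- tv T)) (row (tv T') x)).
- by rewrite /mx2 col_comp !row_col compNr ef2 subrr comp0l compNl compNr opprK vu0 add0r col00.
- by rewrite /mx2 row_col !comp_row row_add compNr comp0r eg subrr vu0' addr0 row00.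
- have he : Sigm (idm (ta T) - f' \oc f) \oc tw T = 0.
    rewrite Sig_add SigN Sig_comp Sig_id compDl compNl comp1m -compA ef1 compA ef1'.
    by rewrite -compA yx compDr compm1 compA wv0 comp0l addr0 subrr.
  have [k ek0] := L1 (dist_rot (dist_rot dT)) he.
  have [k0 ek1] := Sig_surj k.
  move: ek0; rewrite /= -ek1 compNr -Sig_comp -SigN => /Sig_inj ek0.
  exists (row f' k0); by rewrite row_col compNr -ek0 addrC subrK.
- move=> pi; rewrite (row_eta pi).
  set pA := pi \oc bin1 _ _; set pB := pi \oc bin2 _ _.
  rewrite row_col compNr => /eqP; rewrite subr_eq0 => /eqP hAB.
  have h1 : (Sigm pA \oc tw T') \oc x = 0.
    by rewrite -compA -ef1 compA -Sig_comp hAB Sig_comp -compA uw0 comp0r.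
  have h2 : Sigm pA \oc tw T' = 0.
    have := f_equal (fun t => t \oc y) h1; rewrite /= comp0l -compA xy compDr compm1.
    by rewrite compA -(compA _ (tw T')) wv0' comp0r comp0l addr0.
  have [k ek0] := L1 (dist_rot (dist_rot dT')) h2.
  have [b0 eb0] := Sig_surj k.
  move: ek0; rewrite /= -eb0 compNr -Sig_comp -SigN => /Sig_inj epA.
  have h3 : (pB - (- b0) \oc g) \oc tu T = 0.
    by rewrite compBl -compA ef2 compA compNl -epA hAB subrr.
  have [k1 ek1] := L1 dT h3.
  exists (row (- b0) (- k1)).
  rewrite /mx2 row_col !comp_row row_add; apply: row_eq.
    by rewrite comp0r addr0 compNl epA.
  by rewrite compNl compNr opprK -ek1 addrC subrK.
- move=> pi; rewrite (row_eta pi).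
  set pB := pi \oc bin1 _ _; set pC := pi \oc bin2 _ _.
  rewrite /mx2 row_col !comp_row row_add => /row0 [h1 h2].
  move: h1; rewrite comp0r addr0 => h1.
  move: h2; rewrite compNr => /eqP; rewrite subr_eq0 => /eqP h2.
  have [k' ekk] := L1 dT' h1.
  have h3 : (pC - k' \oc x) \oc tv T = 0.
    by rewrite compBl -compA eg compA -ekk h2 subrr.
  have [k'' ek''] := L1 (dist_rot dT) h3.
  exists (k' + (k'' \oc tw T) \oc y).
  rewrite comp_row; apply: row_eq.
    rewrite compDl -compA eg' compA -(compA k'') wv0 comp0r comp0l addr0.
    by rewrite ekk.
  by rewrite compDl -compA yx compDr compm1 compA -(compA k'') wv0 comp0r comp0l addr0 -ek'' addrC subrK.
- exists (col (- s') y); by rewrite row_col compNr xy addrC addrK.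
Qed.
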